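(* (a) For any data, the merge-based algorithm (Algorithm 4 below) with threshold $d_{th}$ terminates after a finite number of iterations. (b) Suppose the data model satisfies Assumption A with the same $d_{th}$ used by the algorithm and constants $a_1,a_2,a_3\ge0$, $b>0$. Then for every integer $T\ge0$, the probability that the partition after $T$ iterations (the final partition, if it terminated earlier) is incorrect is at most $$M^2\big((T+1)a_1+a_2+(T+1)a_3\big)e^{-bn}.$$
   Context: Setting: $\mathcal{P}_1,\dots,\mathcal{P}_K$ are sets (''distribution clusters'') of probability distributions, $K$ unknown to the algorithm; $d$ is a symmetric real-valued function used both between distributions and between finite sequences. $d(\mathcal{P}_k)=\sup_{p,p'\in\mathcal{P}_k}d(p,p')$, $d(\mathcal{P}_k,\mathcal{P}_{k'})=\inf_{p\in\mathcal{P}_k,q\in\mathcal{P}_{k'}}d(p,q)$, $d_L=\max_kd(\mathcal{P}_k)$, $d_H=\min_{k\ne k'}d(\mathcal{P}_k,\mathcal{P}_{k'})$. For each $k$, $M_k\ge1$ sequences $\mathbf{x}_{k,j}$, each of $n$ i.i.d. samples from some $p_{k,j}\in\mathcal{P}_k$, all mutually independent; $M=\sum M_k$; the algorithm receives the unlabeled collection $\mathbf{y}_1,\dots,\mathbf{y}_M$. A partition is correct iff it equals $\{\{\mathbf{x}_{k,j}:j\}:k=1..K\}$. Assumption A (with $d_{th}$, $a_1,a_2,a_3$, $b>0$): $d_L<d_H$, $d_{th}\in(d_L,d_H)$, and for all $k\ne k'$, $j,j_1,j_2\le M_k$, $j'\le M_{k'}$: $P(d(\mathbf{x}_{k,j},\mathbf{x}_{k',j'})\le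 d_{th})\le a_1e^{-bn}$; for $j_1\ne j_2$, $P(d(\mathbf{x}_{k,j_1},\mathbf{x}_{k,j_2})>d_{th})\le a_2e^{-bn}$; and ($j_1,j_2$ not necessarily distinct) $P(d(\mathbf{x}_{k,j_1},\mathbf{x}_{k,j_2})\ge d(\mathbf{x}_{k,j_1},\mathbf{x}_{k',j'}))\le a_3e^{-bn}$. Algorithm 4 (ties arbitrary). Initialization (Algorithm 3): choose any $\mathbf{y}_i$ as $\mathbf{c}_1$, $\hat K=1$; while some sequence has distance greater than $d_{th}$ to every current center, add $\mathbf{c}_{\hat K+1}=\arg\max_{\mathbf{y}_i}\min_{k\le\hat K}d(\mathbf{y}_i,\mathbf{c}_k)$ and set $\hat K\leftarrow\hat K+1$; then assign each sequence to its nearest center. Each iteration: (center update) $\mathbf{c}_k=\arg\min_{\mathbf{y}\in\mathcal{C}_k}\sum_{\mathbf{y}'\in\mathcal{C}_k}d(\mathbf{y},\mathbf{y}')$ for each current cluster; (merge step) for each pair of distinct current clusters $k_1,k_2$ with $d(\mathbf{c}_{k_1},\mathbf{c}_{k_2})\le d_{th}$: if $\sum_{\mathbf{y}\in\mathcal{C}_{k_1}}d(\mathbf{c}_{k_2},\mathbf{y})<\sum_{\mathbf{y}\in\mathcal{C}_{k_2}}d(\mathbf{c}_{k_1},\mathbf{y})$, replace $\mathcal{C}_{k_2}$ by $\mathcal{C}_{k_1}\cup\mathcal{C}_{k_2}$ (center $\mathbf{c}_{k_2}$) and delete cluster $k_1$, otherwise replace $\mathcal{C}_{k_1}$ by the union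 (center $\mathbf{c}_{k_1}$) and delete cluster $k_2$; $\hat K\leftarrow\hat K-1$; (cluster update) for each $i$, if $\mathbf{y}_i\in\mathcal{C}_{k'}$ and $d(\mathbf{y}_i,\mathbf{c}_k)<d(\mathbf{y}_i,\mathbf{c}_{k'})$, move $\mathbf{y}_i$ to $\mathcal{C}_k$. Stops when an iteration changes nothing; ''after 0 iterations'' means after initialization. *)

(* Defs.v *)
From Stdlib Require Import Reals List Arith Bool.
Open Scope bool_scope.
Import ListNotations.
Open Scope R_scope.

Definition Rleb (x y : R) : bool := if Rle_dec x y then true else false.
Definition Rltb (x y : R) : bool := if Rlt_dec x y then true else false.

Definition sumR {A : Type} (f : A -> R) (l : list A) : R :=
  fold_right (fun a s => f a + s) 0 l.

Fixpoint prodR (m : nat) (f : nat -> R) : R :=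
  match m with
  | O => 1
  | S m' => prodR m' f * f m'
  end.

Definition minR_list (f : nat -> R) (l : list nat) : R :=
  match l with
  | [] => 0
  | c :: l' => fold_right (fun c' m => Rmin (f c') m) (f c) l'
  end.

Definition argmin_set (f : nat -> R) (l : list nat) : list nat :=
  filter (fun c => forallb (fun c' => Rleb (f c) (f c')) l) l.
Definition argmax_set (f : nat -> R) (l : list nat) : list nat :=
  filter (fun c => forallb (fun c' => Rleb (f c') (f c)) l) l.

(* Every arbitrary choice made by the algorithm is resolved by a fixed
   selection rule, which sees the kind of choice and the list of tied
   candidates (indices of sequences). *)
Inductive choice_point : Type :=
  | CFirst            (* choice of c_1 among all sequences *)
  | CInitMax          (* argmax in the initialisation loop *)
  | CAssign (i : nat) (* nearest centre for y_i at the end of initialisation *)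
  | CMedoid           (* argmin in the centre update *)
  | CMove (i : nat).  (* nearest centre for y_i in the cluster update *)

Definition sel_ok (sel : choice_point -> list nat -> nat) : Prop :=
  forall cp l, l <> [] -> In (sel cp l) l.
Definition selp_ok (selp : list (nat * nat) -> nat * nat) : Prop :=
  forall l, l <> [] -> In (selp l) l.

(* A state is a list [a] of length M: [nth i a 0] is the index of the centre
   of the cluster containing y_i.  Clusters are identified with (the index of)
   their centres: the clusters are the nonempty sets {i | a_i = c}. *)
Section Algo.
Context {X : Type} (d : X -> X -> R) (dth : R) (M : nat) (y : nat -> X)
  (sel : choice_point -> list nat -> nat) (selp : list (nat * nat) -> nat * nat).

Definition idx : list nat := seq 0 M.
Definition cur (a : list nat) (i : nat) : nat := nth i a 0%nat.
Definition centers (a : list nat) : list nat := nodup Nat.eq_dec a.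
Definition members (a : list nat) (c : nat) : list nat :=
  filter (fun i => Nat.eqb (cur a i) c) idx.

(* Algorithm 3: initialisation.  The while loop adds a new (distinct) sequence
   at each round, so M rounds of fuel always suffice under the standing
   hypotheses. *)
Fixpoint grow (fuel : nat) (cs : list nat) : list nat :=
  match fuel with
  | O => cs
  | S f =>
      if existsb (fun i => forallb (fun c => Rltb dth (d (y i) (y c))) cs) idx
      then grow f (cs ++ [sel CInitMax
                            (argmax_set (fun i => minR_list (fun c => d (y i) (y c)) cs) idx)])
      else cs
  end.

Definition init_centers : list nat := grow M [sel CFirst idx].

Definition init_state : list nat :=
  map (fun i => sel (CAssign i) (argmin_set (fun c => d (y i) (y c)) init_centers)) idx.

Definition center_update (a : list nat) : list nat :=
  let newc c := sel CMedoid
       (argmin_set (fun z => sumR (fun i => d (y z) (y i)) (members a c)) (members a c)) in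
  map newc a.

Definition eligible (a : list nat) : list (nat * nat) :=
  filter (fun pr => negb (Nat.eqb (fst pr) (snd pr)) && Rleb (d (y (fst pr)) (y (snd pr))) dth)
         (list_prod (centers a) (centers a)).

Definition merge_one (a : list nat) (pr : nat * nat) : list nat :=
  let c1 := fst pr in let c2 := snd pr in
  let S1 := sumR (fun i => d (y c2) (y i)) (members a c1) in
  let S2 := sumR (fun i => d (y c1) (y i)) (members a c2) in
  let w := if Rltb S1 S2 then c2 else c1 in
  map (fun c => if Nat.eqb c c1 || Nat.eqb c c2 then w else c) a.

(* each merge removes one cluster, so M rounds of fuel always suffice *)
Fixpoint merge_loop (fuel : nat) (a : list nat) : list nat :=
  match fuel with
  | O => a
  | S f =>
      match eligible a with
      | [] => a
      | prs => merge_loop f (merge_one a (selp prs))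
      end
  end.

Definition merge_step (a : list nat) : list nat := merge_loop M a.

Definition cluster_update (a : list nat) : list nat :=
  let cs := centers a in
  map (fun i =>
         if existsb (fun c => Rltb (d (y i) (y c)) (d (y i) (y (cur a i)))) cs
         then sel (CMove i) (argmin_set (fun c => d (y i) (y c)) cs)
         else cur a i) idx.

Definition iteration (a : list nat) : list nat :=
  cluster_update (merge_step (center_update a)).

(* state after T iterations (0 iterations = after initialisation); once the
   algorithm has stopped (iteration changes nothing) the state stays fixed *)
Definition run (T : nat) : list nat := Nat.iter T iteration init_state.

End Algo.

(* The partition encoded by state [a] equals the true partition
   {{i | lab i = k} : k < K} (as a set of subsets of {0..M-1}). *)
Definition correct_partition (M K : nat) (lab : nat -> nat) (a : list nat) : Prop :=
  (forall c, In c a -> exists k, (k < K)%nat /\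
       forall i, (i < M)%nat -> (nth i a 0%nat = c <-> lab i = k)) /\
  (forall k, (k < K)%nat -> exists c, In c a /\
       forall i, (i < M)%nat -> (nth i a 0%nat = c <-> lab i = k)).

(* A (finitely additive) probability on all subsets of T. *)
Record charge (T : Type) : Type := {
  mass :> (T -> Prop) -> R;
  mass_nonneg : forall A, 0 <= mass A;
  mass_total : mass (fun _ => True) = 1;
  mass_add : forall A B : T -> Prop, (forall t, A t -> B t -> False) ->
               mass (fun t => A t \/ B t) = mass A + mass B
}.
Arguments mass {T}.

(* The sequence y_i : its n samples X i 0, ..., X i (n-1). *)
Definition data {S Omega : Type} (n : nat) (Xs : nat -> nat -> Omega -> S)
  (i : nat) (w : Omega) : list S :=
  map (fun t => Xs i t w) (seq 0 n).

Definition iid_model {S Omega : Type} (Pr : charge Omega) (M n : nat)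
  (p : nat -> charge S) (Xs : nat -> nat -> Omega -> S) : Prop :=
  forall A : nat -> nat -> S -> Prop,
    Pr (fun w => forall i t, (i < M)%nat -> (t < n)%nat -> A i t (Xs i t w)) =
    prodR M (fun i => prodR n (fun t => p i (A i t))).

(* d_L < d_th < d_H, with d_L = max_k sup_{q,q' in P_k} dP q q' and
   d_H = min_{k<>k'} inf_{q in P_k, q' in P_k'} dP q q' written out. *)
Definition threshold_separates {D : Type} (K : nat) (Pc : nat -> D -> Prop)
  (dP : D -> D -> R) (dth : R) : Prop :=
  exists L H, L < dth /\ dth < H /\
    (forall k q q', (k < K)%nat -> Pc k q -> Pc k q' -> dP q q' <= L) /\
    (forall k k' q q', (k < K)%nat -> (k' < K)%nat -> k <> k' ->
        Pc k q -> Pc k' q' -> H <= dP q q').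

Definition assumptionA_bounds {Y Omega : Type} (Pr : charge Omega) (M n : nat)
  (lab : nat -> nat) (yr : nat -> Omega -> Y) (d : Y -> Y -> R)
  (dth a1 a2 a3 b : R) : Prop :=
  (forall i i', (i < M)%nat -> (i' < M)%nat -> lab i <> lab i' ->
     Pr (fun w => d (yr i w) (yr i' w) <= dth) <= a1 * exp (- (b * INR n))) /\
  (forall i1 i2, (i1 < M)%nat -> (i2 < M)%nat -> i1 <> i2 -> lab i1 = lab i2 ->
     Pr (fun w => d (yr i1 w) (yr i2 w) > dth) <= a2 * exp (- (b * INR n))) /\
  (forall i1 i2 i', (i1 < M)%nat -> (i2 < M)%nat -> (i' < M)%nat ->
     lab i1 = lab i2 -> lab i' <> lab i1 ->
     Pr (fun w => d (yr i1 w) (yr i2 w) >= d (yr i1 w) (yr i' w))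
       <= a3 * exp (- (b * INR n))).

(* Main.v *)
Require Import Defs.
From Stdlib Require Import Reals List Arith.
From Stdlib Require Import Lia Lra Classical FunctionalExtensionality PropExtensionality Permutation.
Import ListNotations.
Open Scope R_scope.

Lemma Rleb_true x y : Rleb x y = true <-> x <= y.
Proof. unfold Rleb; destruct (Rle_dec x y); split; intros; auto; try discriminate; contradiction. Qed.
Lemma Rltb_true x y : Rltb x y = true <-> x < y.
Proof. unfold Rltb; destruct (Rlt_dec x y); split; intros; auto; try discriminate; contradiction. Qed.

Lemma sumR_cons {A} (f : A -> R) x l : sumR f (x :: l) = f x + sumR f l.
Proof. reflexivity. Qed.
Lemma sumR_nil {A} (f : A -> R) : sumR f [] = 0.
Proof. reflexivity. Qed.

Lemma sumR_le {A} (f g : A -> R) l : (forall x, In x l -> f x <= g x) -> sumR f l <= sumR g l.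
Proof. induction l; intros H; simpl. lra. pose proof (H a (or_introl eq_refl)).
  assert (sumR f l <= sumR g l) by (apply IHl; intros; apply H; right; auto). unfold sumR in *; simpl in *; lra. Qed.

Lemma sumR_lt {A} (f g : A -> R) l : (forall x, In x l -> f x <= g x) ->
  (exists x, In x l /\ f x < g x) -> sumR f l < sumR g l.
Proof. induction l; intros H [x [Hx Hlt]]; simpl in *. contradiction.
  destruct Hx as [<-|Hx].
  - assert (sumR f l <= sumR g l) by (apply sumR_le; intros; apply H; right; auto). unfold sumR in *; simpl in *; lra.
  - pose proof (H a (or_introl eq_refl)).
    assert (sumR f l < sumR g l) by (apply IHl; [intros; apply H; right; auto| eauto]). unfold sumR in *; simpl in *; lra. Qed.

Lemma sumR_ext_in {A} (f g : A -> R) l : (forall x, In x l -> f x = g x) -> sumR f l = sumR g l.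
Proof. intros H; apply Rle_antisym; apply sumR_le; intros x Hx; rewrite (H x Hx); lra. Qed.

Lemma sumR_plus {A} (f g : A -> R) l : sumR (fun x => f x + g x) l = sumR f l + sumR g l.
Proof. induction l; simpl. lra. unfold sumR in *; simpl in *; rewrite IHl; lra. Qed.

Lemma sumR_const {A} (c : R) (l : list A) : sumR (fun _ => c) l = INR (length l) * c.
Proof. induction l. simpl; lra. change (length (a::l)) with (S (length l)). rewrite S_INR.
  rewrite sumR_cons, IHl. lra. Qed.

Lemma sumR_ind0 (v : nat) (r : R) cs : ~ In v cs ->
  sumR (fun c => if Nat.eqb v c then r else 0) cs = 0.
Proof. induction cs as [|c cs IH]; intros Hn. reflexivity. rewrite sumR_cons.
  destruct (Nat.eqb_spec v c). subst; exfalso; apply Hn; left; auto. rewrite IH. lra. intros H; apply Hn; right; auto. Qed.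

Lemma sumR_ind (v : nat) (r : R) cs : NoDup cs -> In v cs ->
  sumR (fun c => if Nat.eqb v c then r else 0) cs = r.
Proof. induction cs as [|c cs IH]; intros Hnd Hin. contradiction.
  inversion Hnd; subst. rewrite sumR_cons. destruct Hin as [->|Hin].
  - rewrite Nat.eqb_refl. rewrite sumR_ind0; auto. lra.
  - destruct (Nat.eqb_spec v c). subst; contradiction. rewrite IH; auto. lra. Qed.

Lemma sumR_group (h : nat -> nat) (f : nat -> R) l cs : NoDup cs -> (forall x, In x l -> In (h x) cs) ->
  sumR f l = sumR (fun c => sumR f (filter (fun x => Nat.eqb (h x) c) l)) cs.
Proof. intros Hnd. induction l as [|x l IH]; intros Hin.
  - simpl. rewrite sumR_const; lra.
  - rewrite sumR_cons. rewrite IH by (intros; apply Hin; right; auto).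
    transitivity (sumR (fun c => (if Nat.eqb (h x) c then f x else 0) + sumR f (filter (fun x0 => Nat.eqb (h x0) c) l)) cs).
    + rewrite sumR_plus. rewrite (sumR_ind (h x) (f x) cs Hnd (Hin x (or_introl eq_refl))). reflexivity.
    + apply sumR_ext_in. intros c _. simpl. destruct (Nat.eqb (h x) c); simpl; unfold sumR; simpl; lra. Qed.

Lemma argmin_spec (f : nat -> R) l z : In z (argmin_set f l) -> In z l /\ forall c, In c l -> f z <= f c.
Proof. unfold argmin_set. rewrite filter_In, forallb_forall. intros [H1 H2]; split; auto.
  intros c Hc; apply Rleb_true; auto. Qed.
Lemma argmax_spec (f : nat -> R) l z : In z (argmax_set f l) -> In z l /\ forall c, In c l -> f c <= f z.
Proof. unfold argmax_set. rewrite filter_In, forallb_forall. intros [H1 H2]; split; auto.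
  intros c Hc; apply Rleb_true; auto. Qed.

Lemma exists_min (f : nat -> R) l : l <> [] -> exists z, In z l /\ forall c, In c l -> f z <= f c.
Proof. induction l as [|a l IH]; intros H. congruence.
  destruct l as [|b l]. exists a; split; [left; auto|]. intros c [<-|[]]; lra.
  destruct IH as [z [Hz Hm]]. congruence.
  destruct (Rle_dec (f a) (f z)).
  - exists a; split; [left; auto|]. intros c [<-|Hc]. lra. specialize (Hm c Hc); lra.
  - exists z; split; [right; auto|]. intros c [<-|Hc]. lra. auto. Qed.
Lemma exists_max (f : nat -> R) l : l <> [] -> exists z, In z l /\ forall c, In c l -> f c <= f z.
Proof. intros H. destruct (exists_min (fun x => - f x) l H) as [z [Hz Hm]]. exists z; split; auto.
  intros c Hc; specialize (Hm c Hc); lra. Qed.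

Lemma argmin_nonempty f l : l <> [] -> argmin_set f l <> [].
Proof. intros H. destruct (exists_min f l H) as [z [Hz Hm]]. intros He.
  assert (In z (argmin_set f l)). { unfold argmin_set. apply filter_In; split; auto.
  apply forallb_forall; intros; apply Rleb_true; auto. } rewrite He in H0; auto. Qed.
Lemma argmax_nonempty f l : l <> [] -> argmax_set f l <> [].
Proof. intros H. destruct (exists_max f l H) as [z [Hz Hm]]. intros He.
  assert (In z (argmax_set f l)). { unfold argmax_set. apply filter_In; split; auto.
  apply forallb_forall; intros; apply Rleb_true; auto. } rewrite He in H0; auto. Qed.

Lemma nth_map_lt (F : nat -> nat) l i d0 : (i < length l)%nat -> nth i (map F l) d0 = F (nth i l 0%nat).
Proof. intros H. rewrite nth_indep with (d' := F 0%nat) by (rewrite length_map; auto). apply map_nth. Qed.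

Lemma cur_map_idx (F : nat -> nat) M i : (i < M)%nat -> cur (map F (idx M)) i = F i.
Proof. intros H. unfold cur, idx. rewrite nth_map_lt by (rewrite length_seq; auto). rewrite seq_nth; auto. Qed.

Lemma map_cur_idx a M : length a = M -> map (cur a) (idx M) = a.
Proof. intros H. apply nth_ext with (d := 0%nat) (d' := 0%nat).
  unfold idx; rewrite length_map, length_seq; auto.
  intros n Hn. unfold idx in *. rewrite length_map, length_seq in Hn. rewrite nth_map_lt by (rewrite length_seq; auto).
  rewrite seq_nth by auto. reflexivity. Qed.

Lemma in_idx M i : In i (idx M) <-> (i < M)%nat.
Proof. unfold idx; rewrite in_seq; lia. Qed.

Lemma cnt_incl (a b : list nat) : incl b a -> (length (nodup Nat.eq_dec b) <= length (nodup Nat.eq_dec a))%nat.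
Proof. intros H. apply NoDup_incl_length. apply NoDup_nodup. intros x Hx. apply nodup_In. apply nodup_In in Hx; auto. Qed.

Lemma cnt_map (F : nat -> nat) a : (length (nodup Nat.eq_dec (map F a)) <= length (nodup Nat.eq_dec a))%nat.
Proof. rewrite <- (length_map F (nodup Nat.eq_dec a)). apply NoDup_incl_length. apply NoDup_nodup.
  intros x Hx. apply nodup_In in Hx. apply in_map_iff in Hx. destruct Hx as [z [<- Hz]].
  apply in_map. apply nodup_In; auto. Qed.

Lemma NoDup_map_eq {A} (f : A -> nat) l x x' : NoDup (map f l) -> In x l -> In x' l -> f x = f x' -> x = x'.
Proof. induction l; simpl; intros Hnd H1 H2 He. contradiction. inversion Hnd; subst.
  destruct H1 as [<-|H1], H2 as [<-|H2]; auto.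
  - exfalso; apply H3; rewrite He; apply in_map; auto.
  - exfalso; apply H3; rewrite <- He; apply in_map; auto. Qed.

Definition cnt (a : list nat) : nat := length (nodup Nat.eq_dec a).
Definition WF (M : nat) (a : list nat) : Prop := length a = M /\ forall x, In x a -> (x < M)%nat.
Definition Ifix (M : nat) (a : list nat) : Prop := forall i, (i < M)%nat -> cur a (cur a i) = cur a i.
Definition newc {X} (d : X -> X -> R) M (y : nat -> X) (sel : choice_point -> list nat -> nat) a c :=
  sel CMedoid (argmin_set (fun z => sumR (fun i => d (y z) (y i)) (members M a c)) (members M a c)).
Definition cost {X} (d : X -> X -> R) M (y : nat -> X) a := sumR (fun i => d (y i) (y (cur a i))) (idx M).

Lemma cu_eq {X} (d : X -> X -> R) M y sel a : center_update d M y sel a = map (newc d M y sel a) a.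
Proof. reflexivity. Qed.

Lemma in_members M a c j : In j (members M a c) <-> (j < M)%nat /\ cur a j = c.
Proof. unfold members. rewrite filter_In, in_idx, Nat.eqb_eq. tauto. Qed.

Lemma In_cur M a i : length a = M -> (i < M)%nat -> In (cur a i) a.
Proof. intros H Hi. unfold cur. apply nth_In. lia. Qed.

Lemma In_ex_cur M a x : length a = M -> In x a -> exists i, (i < M)%nat /\ cur a i = x.
Proof. intros H Hx. destruct (In_nth a x 0%nat Hx) as [i [Hi He]]. exists i; split; [lia|auto]. Qed.

Lemma fix_of M a x : WF M a -> Ifix M a -> In x a -> cur a x = x.
Proof. intros [Hl Hb] Hf Hx. destruct (In_ex_cur M a x Hl Hx) as [i [Hi <-]]. apply Hf; auto. Qed.

Lemma newc_spec {X} (d : X -> X -> R) M y sel a v : sel_ok sel -> length a = M -> In v a ->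
  let z := newc d M y sel a v in
  ((z < M)%nat /\ cur a z = v) /\
  forall c, In c (members M a v) -> sumR (fun i => d (y z) (y i)) (members M a v) <= sumR (fun i => d (y c) (y i)) (members M a v).
Proof. intros Hs Hl Hv z.
  destruct (In_ex_cur M a v Hl Hv) as [i [Hi Hc]].
  assert (Hne : members M a v <> []). { intros He. assert (In i (members M a v)) by (apply in_members; auto). rewrite He in H; auto. }
  assert (Hz : In z (argmin_set (fun z => sumR (fun i => d (y z) (y i)) (members M a v)) (members M a v))).
  { apply Hs. apply argmin_nonempty; auto. }
  apply argmin_spec in Hz. destruct Hz as [Hz1 Hz2]. split; auto. apply in_members; auto. Qed.

Lemma cur_cu {X} (d : X -> X -> R) M y sel a i : length a = M -> (i < M)%nat ->
  cur (center_update d M y sel a) i = newc d M y sel a (cur a i).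
Proof. intros Hl Hi. rewrite cu_eq. unfold cur. apply nth_map_lt. lia. Qed.

Lemma cu_WF {X} (d : X -> X -> R) M y sel a : sel_ok sel -> WF M a ->
  WF M (center_update d M y sel a) /\ Ifix M (center_update d M y sel a).
Proof. intros Hs [Hl Hb]. split; [split|].
  - rewrite cu_eq, length_map; auto.
  - intros x Hx. rewrite cu_eq in Hx. apply in_map_iff in Hx. destruct Hx as [v [<- Hv]].
    apply (newc_spec d M y sel a v Hs Hl Hv).
  - intros i Hi. rewrite (cur_cu d M y sel a i Hl Hi).
    pose proof (newc_spec d M y sel a (cur a i) Hs Hl (In_cur M a i Hl Hi)) as [[Hz1 Hz2] _].
    rewrite (cur_cu d M y sel a _ Hl Hz1). rewrite Hz2. reflexivity. Qed.

Lemma cu_idem {X} (d : X -> X -> R) M y sel a : sel_ok sel -> WF M a ->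
  center_update d M y sel (center_update d M y sel a) = center_update d M y sel a.
Proof. intros Hs [Hl Hb]. set (s' := center_update d M y sel a).
  assert (Hl' : length s' = M) by (unfold s'; rewrite cu_eq, length_map; auto).
  rewrite (cu_eq d M y sel s'). transitivity (map (fun x => x) s'); [|apply map_id]. apply map_ext_in.
  intros x Hx. unfold s' in Hx. rewrite cu_eq in Hx. apply in_map_iff in Hx. destruct Hx as [v [<- Hv]].
  assert (Hinj : forall j, (j < M)%nat -> (newc d M y sel a (cur a j) = newc d M y sel a v <-> cur a j = v)).
  { intros j Hj; split; intros E; [|rewrite E; auto].
    pose proof (newc_spec d M y sel a (cur a j) Hs Hl (In_cur M a j Hl Hj)) as [[_ H1] _].
    pose proof (newc_spec d M y sel a v Hs Hl Hv) as [[_ H2] _].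
    rewrite <- H1, <- H2, E. reflexivity. }
  assert (Hm : members M s' (newc d M y sel a v) = members M a v).
  { unfold members. apply filter_ext_in. intros j Hj. apply in_idx in Hj.
    unfold s'. rewrite (cur_cu d M y sel a j Hl Hj).
    destruct (Nat.eqb_spec (newc d M y sel a (cur a j)) (newc d M y sel a v));
    destruct (Nat.eqb_spec (cur a j) v); auto.
    all: exfalso; specialize (Hinj j Hj); tauto. }
  unfold newc at 1. rewrite Hm. reflexivity. Qed.

Lemma cu_cnt {X} (d : X -> X -> R) M y sel a : (cnt (center_update d M y sel a) <= cnt a)%nat.
Proof. unfold cnt. rewrite cu_eq. apply cnt_map. Qed.

Lemma cost_group {X} (d : X -> X -> R) M y a b : length a = M ->
  cost d M y b = sumR (fun c => sumR (fun i => d (y i) (y (cur b i))) (members M a c)) (centers a).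
Proof. intros Hl. unfold cost. apply sumR_group. apply NoDup_nodup.
  intros x Hx. apply in_idx in Hx. apply nodup_In. apply (In_cur M); auto. Qed.

Lemma cu_cost {X} (d : X -> X -> R) M y sel a : sel_ok sel -> (forall u v, d u v = d v u) ->
  WF M a -> Ifix M a -> cost d M y (center_update d M y sel a) <= cost d M y a.
Proof. intros Hs Hsym [Hl Hb] Hf.
  rewrite (cost_group d M y a _ Hl), (cost_group d M y a a Hl).
  apply sumR_le. intros c Hc. apply nodup_In in Hc.
  pose proof (newc_spec d M y sel a c Hs Hl Hc) as [_ Hmin].
  rewrite (sumR_ext_in _ (fun i => d (y (newc d M y sel a c)) (y i))).
  2:{ intros i Hi. apply in_members in Hi. destruct Hi as [Hi Hci].
      rewrite (cur_cu d M y sel a i Hl Hi), Hci. apply Hsym. }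
  rewrite (sumR_ext_in (fun i => d (y i) (y (cur a i))) (fun i => d (y c) (y i))).
  2:{ intros i Hi. apply in_members in Hi. destruct Hi as [Hi Hci]. rewrite Hci. apply Hsym. }
  apply Hmin. apply in_members. split. apply Hb; auto. apply (fix_of M); auto. split; auto. Qed.

Lemma eligible_in {X} (d : X -> X -> R) dth y a pr : In pr (eligible d dth y a) ->
  fst pr <> snd pr /\ In (fst pr) a /\ In (snd pr) a.
Proof. unfold eligible. rewrite filter_In. destruct pr as [c1 c2]. simpl.
  intros [H1 H2]. apply in_prod_iff in H1. destruct H1 as [H1 H3].
  apply Bool.andb_true_iff in H2. destruct H2 as [H2 _]. apply Bool.negb_true_iff, Nat.eqb_neq in H2.
  unfold centers in *. rewrite nodup_In in H1, H3. auto. Qed.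

Lemma merge_one_props {X} (d : X -> X -> R) M y a c1 c2 : WF M a -> Ifix M a -> c1 <> c2 -> In c1 a -> In c2 a ->
  WF M (merge_one d M y a (c1, c2)) /\ Ifix M (merge_one d M y a (c1, c2)) /\
  (cnt (merge_one d M y a (c1, c2)) < cnt a)%nat.
Proof. intros [Hl Hb] Hf Hne H1 H2. unfold merge_one. simpl.
  set (w := if Rltb _ _ then c2 else c1).
  assert (Hw : w = c1 /\ w <> c2 \/ w = c2 /\ w <> c1) by (unfold w; destruct Rltb; auto).
  set (G := fun c => if Nat.eqb c c1 || Nat.eqb c c2 then w else c).
  change (fun c => if Nat.eqb c c1 || Nat.eqb c c2 then w else c) with G.
  assert (HGa : forall v, In v a -> In (G v) a).
  { intros v Hv. unfold G. destruct (_ || _); auto. destruct Hw as [[->_]|[->_]]; auto. }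
  assert (HGG : forall v, G (G v) = G v).
  { intros v. unfold G. destruct (Nat.eqb v c1 || Nat.eqb v c2) eqn:E1.
    - destruct (Nat.eqb w c1 || Nat.eqb w c2); reflexivity.
    - rewrite E1; reflexivity. }
  assert (Hl' : length (map G a) = M) by (rewrite length_map; auto).
  split; [split|split].
  - auto.
  - intros x Hx. apply in_map_iff in Hx. destruct Hx as [v [<- Hv]]. apply Hb, HGa; auto.
  - intros i Hi. assert (E1 : cur (map G a) i = G (cur a i)) by (unfold cur; apply nth_map_lt; lia).
    rewrite E1. assert (Hv : In (G (cur a i)) a) by (apply HGa, (In_cur M); auto).
    assert (E2 : cur (map G a) (G (cur a i)) = G (cur a (G (cur a i)))) by (unfold cur; apply nth_map_lt; rewrite Hl; apply Hb; auto).
    rewrite E2, (fix_of M a (G (cur a i))); auto. split; auto.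
  - set (lo := if Nat.eq_dec w c1 then c2 else c1).
    assert (Hlo : In lo a /\ lo <> w) by (unfold lo; destruct Nat.eq_dec; split; auto; destruct Hw as [[? ?]|[? ?]]; congruence).
    unfold cnt. apply Nat.le_lt_trans with (length (remove Nat.eq_dec lo (nodup Nat.eq_dec a))).
    + apply NoDup_incl_length. apply NoDup_nodup. intros x Hx. apply nodup_In in Hx.
      apply in_map_iff in Hx. destruct Hx as [v [<- Hv]]. apply in_in_remove.
      * unfold G, lo. destruct (Nat.eqb_spec v c1), (Nat.eqb_spec v c2); simpl; destruct Nat.eq_dec;
        destruct Hw as [[? ?]|[? ?]]; congruence.
      * apply nodup_In, HGa; auto.
    + apply remove_length_lt. apply nodup_In. tauto. Qed.

Lemma ml_props {X} (d : X -> X -> R) dth M y selp f a : selp_ok selp -> WF M a -> Ifix M a ->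
  WF M (merge_loop d dth M y selp f a) /\ Ifix M (merge_loop d dth M y selp f a) /\
  (cnt (merge_loop d dth M y selp f a) <= cnt a)%nat /\
  (eligible d dth y a <> [] -> (0 < f)%nat -> (cnt (merge_loop d dth M y selp f a) < cnt a)%nat).
Proof. intros Hs. revert a. induction f as [|f IH]; intros a Hw Hf.
  - simpl. split; [auto|split; [auto|split; [lia| intros _ H; lia]]].
  - simpl. destruct (eligible d dth y a) as [|p ps] eqn:E.
    + split; [auto|split; [auto|split; [lia| intros H; congruence]]].
    + assert (Hin : In (selp (p :: ps)) (eligible d dth y a)) by (rewrite E; apply Hs; congruence).
      destruct (selp (p :: ps)) as [c1 c2] eqn:Ep. apply eligible_in in Hin. simpl in Hin.
      destruct Hin as [Hne [H1 H2]].
      destruct (merge_one_props d M y a c1 c2 Hw Hf Hne H1 H2) as [Hw' [Hf' Hc']].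
      destruct (IH _ Hw' Hf') as [A [B [C D]]]. split; [auto|split; [auto|split; [lia| intros; lia]]]. Qed.

Definition Fclu {X} (d : X -> X -> R) (y : nat -> X) (sel : choice_point -> list nat -> nat) a i :=
  if existsb (fun c => Rltb (d (y i) (y c)) (d (y i) (y (cur a i)))) (centers a)
  then sel (CMove i) (argmin_set (fun c => d (y i) (y c)) (centers a))
  else cur a i.

Lemma clu_eq {X} (d : X -> X -> R) M y sel a : cluster_update d M y sel a = map (Fclu d y sel a) (idx M).
Proof. reflexivity. Qed.

Lemma Fclu_spec {X} (d : X -> X -> R) M y sel a i : sel_ok sel -> length a = M -> (i < M)%nat ->
  In (Fclu d y sel a i) a /\ d (y i) (y (Fclu d y sel a i)) <= d (y i) (y (cur a i)) /\
  (Fclu d y sel a i <> cur a i -> d (y i) (y (Fclu d y sel a i)) < d (y i) (y (cur a i))).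
Proof. intros Hs Hl Hi. unfold Fclu. destruct existsb eqn:E.
  - apply existsb_exists in E. destruct E as [c [Hc Hlt]]. apply Rltb_true in Hlt.
    assert (Hz : In (sel (CMove i) (argmin_set (fun c => d (y i) (y c)) (centers a)))
                    (argmin_set (fun c => d (y i) (y c)) (centers a))).
    { apply Hs, argmin_nonempty. intros He; rewrite He in Hc; auto. }
    apply argmin_spec in Hz. destruct Hz as [Hz1 Hz2]. specialize (Hz2 c Hc).
    unfold centers in Hz1; rewrite nodup_In in Hz1. repeat split; auto; lra.
  - repeat split; auto. apply (In_cur M); auto. lra. intros H; congruence. Qed.

Lemma Fclu_fix {X} (d : X -> X -> R) M y sel a v : (forall u w, d u u <= d u w) -> WF M a -> Ifix M a -> In v a ->
  Fclu d y sel a v = v.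
Proof. intros Hd Hw Hf Hv. pose proof (fix_of M a v Hw Hf Hv) as Hc. unfold Fclu.
  destruct existsb eqn:E; auto. apply existsb_exists in E. destruct E as [c [_ Hlt]].
  apply Rltb_true in Hlt. rewrite Hc in Hlt. specialize (Hd (y v) (y c)). lra. Qed.

Lemma clu_props {X} (d : X -> X -> R) M y sel a : sel_ok sel -> (forall u w, d u u <= d u w) ->
  WF M a -> Ifix M a ->
  WF M (cluster_update d M y sel a) /\ Ifix M (cluster_update d M y sel a) /\
  (cnt (cluster_update d M y sel a) <= cnt a)%nat /\
  cost d M y (cluster_update d M y sel a) <= cost d M y a /\
  (cluster_update d M y sel a <> a -> cost d M y (cluster_update d M y sel a) < cost d M y a).
Proof. intros Hs Hd Hw Hf. pose proof Hw as [Hl Hb]. rewrite clu_eq.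
  assert (Hin : forall x, In x (map (Fclu d y sel a) (idx M)) -> In x a).
  { intros x Hx. apply in_map_iff in Hx. destruct Hx as [i [<- Hi]]. apply in_idx in Hi.
    apply (Fclu_spec d M y sel a i Hs Hl Hi). }
  assert (Hcost : cost d M y (map (Fclu d y sel a) (idx M)) = sumR (fun i => d (y i) (y (Fclu d y sel a i))) (idx M)).
  { unfold cost. apply sumR_ext_in. intros i Hi. apply in_idx in Hi. rewrite cur_map_idx; auto. }
  split; [split|split; [|split; [|split]]].
  - unfold idx; rewrite length_map, length_seq; auto.
  - intros x Hx. apply Hb, Hin; auto.
  - intros i Hi. pose proof (Fclu_spec d M y sel a i Hs Hl Hi) as [HF _].
    rewrite (cur_map_idx _ M i Hi). rewrite cur_map_idx by (apply Hb; auto).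
    apply (Fclu_fix d M); auto.
  - apply cnt_incl. intros x Hx; apply Hin; auto.
  - rewrite Hcost. unfold cost. apply sumR_le. intros i Hi. apply in_idx in Hi.
    apply (Fclu_spec d M y sel a i Hs Hl Hi).
  - intros Hne. rewrite Hcost. unfold cost. apply sumR_lt.
    + intros i Hi. apply in_idx in Hi. apply (Fclu_spec d M y sel a i Hs Hl Hi).
    + apply NNPP. intros Hn. apply Hne. rewrite <- (map_cur_idx a M Hl) at 2. apply map_ext_in.
      intros i Hi. apply NNPP; intros Hne'. apply Hn. exists i. split; auto.
      apply in_idx in Hi. apply (Fclu_spec d M y sel a i Hs Hl Hi); auto. Qed.

Lemma it_eq {X} (d : X -> X -> R) dth M y sel selp a :
  iteration d dth M y sel selp a =
  cluster_update d M y sel (merge_loop d dth M y selp M (center_update d M y sel a)).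
Proof. reflexivity. Qed.

Lemma it_WF {X} (d : X -> X -> R) dth M y sel selp a : sel_ok sel -> selp_ok selp ->
  (forall u w, d u u <= d u w) -> WF M a ->
  WF M (iteration d dth M y sel selp a) /\ Ifix M (iteration d dth M y sel selp a).
Proof. intros Hs Hsp Hd Hw. rewrite it_eq.
  destruct (cu_WF d M y sel a Hs Hw) as [W1 F1].
  destruct (ml_props d dth M y selp M _ Hsp W1 F1) as [W2 [F2 _]].
  destruct (clu_props d M y sel _ Hs Hd W2 F2) as [W3 [F3 _]]. auto. Qed.

Lemma it_mono {X} (d : X -> X -> R) dth M y sel selp a : sel_ok sel -> selp_ok selp ->
  (forall u w, d u u <= d u w) -> (forall u v, d u v = d v u) -> (0 < M)%nat -> WF M a -> Ifix M a ->
  (cnt (iteration d dth M y sel selp a) <= cnt a)%nat /\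
  (cnt (iteration d dth M y sel selp a) = cnt a ->
     cost d M y (iteration d dth M y sel selp a) <= cost d M y a /\
     (cost d M y (iteration d dth M y sel selp a) = cost d M y a ->
        iteration d dth M y sel selp a = center_update d M y sel a)).
Proof. intros Hs Hsp Hd Hsym HM Hw Hf. rewrite it_eq.
  set (s1 := center_update d M y sel a).
  destruct (cu_WF d M y sel a Hs Hw) as [W1 F1]. fold s1 in W1, F1.
  assert (C1 : (cnt s1 <= cnt a)%nat) by apply cu_cnt.
  assert (K1 : cost d M y s1 <= cost d M y a) by (apply cu_cost; auto).
  set (s2 := merge_loop d dth M y selp M s1).
  destruct (ml_props d dth M y selp M s1 Hsp W1 F1) as [W2 [F2 [C2 S2]]]. fold s2 in W2, F2, C2, S2.
  destruct (clu_props d M y sel s2 Hs Hd W2 F2) as [W3 [F3 [C3 [K3 S3]]]].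
  split. lia. intros Heq.
  assert (E : eligible d dth y s1 = []).
  { destruct (eligible d dth y s1) eqn:E; auto. exfalso. assert (H := S2 ltac:(congruence) HM). lia. }
  assert (E2 : s2 = s1). { unfold s2. destruct M; [lia|]. simpl. rewrite E. reflexivity. }
  rewrite E2 in *. split. lra. intros Hc.
  apply NNPP. intros Hn. specialize (S3 Hn). lra. Qed.

Lemma run_S {X} (d : X -> X -> R) dth M y sel selp T :
  run d dth M y sel selp (S T) = iteration d dth M y sel selp (run d dth M y sel selp T).
Proof. reflexivity. Qed.

Lemma grow_bound {X} (d : X -> X -> R) dth M y sel f cs : sel_ok sel -> (0 < M)%nat ->
  (forall x, In x cs -> (x < M)%nat) -> forall x, In x (grow d dth M y sel f cs) -> (x < M)%nat.
Proof. intros Hs HM. revert cs. induction f as [|f IH]; intros cs Hb; simpl; auto.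
  destruct existsb; auto. apply IH. intros x Hx. apply in_app_or in Hx. destruct Hx as [Hx|[<-|[]]]; auto.
  match goal with |- (sel ?cp ?l < M)%nat => assert (Hi : In (sel cp l) l) end.
  { apply Hs. apply argmax_nonempty. unfold idx. destruct M; [lia|]. simpl; congruence. }
  apply argmax_spec in Hi. apply in_idx; tauto. Qed.

Lemma grow_ne {X} (d : X -> X -> R) dth M y sel f cs : cs <> [] -> grow d dth M y sel f cs <> [].
Proof. revert cs. induction f as [|f IH]; intros cs H; simpl; auto.
  destruct existsb; auto. apply IH. destruct cs; simpl; congruence. Qed.

Lemma init_WF {X} (d : X -> X -> R) dth M y sel : sel_ok sel -> (0 < M)%nat ->
  WF M (init_state d dth M y sel).
Proof. intros Hs HM. unfold init_state. split.
  - rewrite length_map. unfold idx; apply length_seq.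
  - intros x Hx. apply in_map_iff in Hx. destruct Hx as [i [<- Hi]].
    assert (Hne : idx M <> []) by (unfold idx; destruct M; [lia|]; simpl; congruence).
    assert (Hc : forall x, In x (init_centers d dth M y sel) -> (x < M)%nat).
    { unfold init_centers. apply grow_bound; auto. intros x [<-|[]]. apply in_idx. apply Hs; auto. }
    apply Hc. match goal with |- In (sel ?cp ?l) _ => assert (Hi' : In (sel cp l) l) end.
    { apply Hs. apply argmin_nonempty. unfold init_centers. apply grow_ne. congruence. }
    apply argmin_spec in Hi'. tauto. Qed.

Fixpoint allL (M k : nat) : list (list nat) :=
  match k with
  | O => [[]]
  | S k' => flat_map (fun x => map (cons x) (allL M k')) (seq 0 M)
  end.

Lemma allL_in M l : (forall x, In x l -> (x < M)%nat) -> In l (allL M (length l)).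
Proof. induction l as [|a l IH]; intros H; simpl. auto.
  apply in_flat_map. exists a. split. apply in_seq. specialize (H a (or_introl eq_refl)). lia.
  apply in_map. apply IH. intros; apply H; right; auto. Qed.

Lemma pigeon (s : nat -> list nat) M : (forall m, WF M (s m)) -> exists i j, (i < j)%nat /\ s i = s j.
Proof. intros H. apply NNPP. intros Hn.
  assert (Hnd : forall k a, NoDup (map s (seq a k))).
  { induction k; intros a; simpl. constructor. constructor; auto.
    intros Hin. apply in_map_iff in Hin. destruct Hin as [j [Hj Hjs]]. apply in_seq in Hjs.
    apply Hn. exists a, j. split; [lia|auto]. }
  set (B := length (allL M M)).
  assert (Hle : (length (map s (seq 0 (S B))) <= B)%nat).
  { apply NoDup_incl_length. apply Hnd. intros l Hl. apply in_map_iff in Hl. destruct Hl as [m [<- _]].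
    destruct (H m) as [Hl Hb]. rewrite <- Hl at 2. apply allL_in; auto. }
  rewrite length_map, length_seq in Hle. lia. Qed.

Lemma mono_nat (g : nat -> nat) i j : (forall m, (i <= m < j)%nat -> (g (S m) <= g m)%nat) ->
  forall m m', (i <= m <= m')%nat -> (m' <= j)%nat -> (g m' <= g m)%nat.
Proof. intros H m m' Hm Hj. induction m' as [|m' IH].
  - assert (m = 0%nat) by lia. subst; lia.
  - destruct (Nat.eq_dec m (S m')). subst; lia. specialize (H m' ltac:(lia)). assert (g m' <= g m)%nat by (apply IH; lia). lia. Qed.

Lemma mono_R (g : nat -> R) i j : (forall m, (i <= m < j)%nat -> g (S m) <= g m) ->
  forall m m', (i <= m <= m')%nat -> (m' <= j)%nat -> g m' <= g m.
Proof. intros H m m' Hm Hj. induction m' as [|m' IH].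
  - assert (m = 0%nat) by lia. subst; lra.
  - destruct (Nat.eq_dec m (S m')). subst; lra. specialize (H m' ltac:(lia)). assert (g m' <= g m) by (apply IH; lia). lra. Qed.

Theorem part_a : forall (X : Type) (d : X -> X -> R) (dth : R) (M : nat) (y : nat -> X)
          (sel : choice_point -> list nat -> nat)
          (selp : list (nat * nat) -> nat * nat),
      (0 < M)%nat -> sel_ok sel -> selp_ok selp ->
      (forall u v, d u v = d v u) ->
      (forall u v, d u u <= d u v) ->
      (forall u, d u u <= dth) ->
      exists N : nat,
        iteration d dth M y sel selp (run d dth M y sel selp N)
        = run d dth M y sel selp N.
Proof. intros X d dth M y sel selp HM Hs Hsp Hsym Hd _.
  set (s := fun m => run d dth M y sel selp (S m)).
  assert (Hall : forall m, WF M (s m) /\ Ifix M (s m)).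
  { intros m. unfold s. rewrite run_S. apply it_WF; auto. induction m.
    apply init_WF; auto. rewrite run_S. apply it_WF; auto. }
  assert (HsS : forall m, s (S m) = iteration d dth M y sel selp (s m)) by reflexivity.
  destruct (pigeon s M (fun m => proj1 (Hall m))) as [i [j [Hij Heq]]].
  assert (Hstep : forall m, (cnt (s (S m)) <= cnt (s m))%nat /\
     (cnt (s (S m)) = cnt (s m) -> cost d M y (s (S m)) <= cost d M y (s m) /\
        (cost d M y (s (S m)) = cost d M y (s m) -> s (S m) = center_update d M y sel (s m)))).
  { intros m. rewrite HsS. apply it_mono; auto; apply Hall. }
  assert (Hc : forall m, (i <= m < j)%nat -> cnt (s (S m)) = cnt (s m)).
  { intros m Hm. pose proof (mono_nat (fun m => cnt (s m)) i j (fun m _ => proj1 (Hstep m))) as Mo.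
    assert (cnt (s j) <= cnt (s (S m)))%nat by (apply Mo; lia).
    assert (cnt (s m) <= cnt (s i))%nat by (apply Mo; lia).
    pose proof (proj1 (Hstep m)). rewrite Heq in *. lia. }
  assert (Hk : forall m, (i <= m < j)%nat -> cost d M y (s (S m)) = cost d M y (s m)).
  { intros m Hm. pose proof (mono_R (fun m => cost d M y (s m)) i j (fun m Hm => proj1 (proj2 (Hstep m) (Hc m Hm)))) as Mo.
    simpl in Mo.
    assert (cost d M y (s j) <= cost d M y (s (S m))) by (apply Mo; lia).
    assert (cost d M y (s m) <= cost d M y (s i)) by (apply Mo; lia).
    pose proof (proj1 (proj2 (Hstep m) (Hc m Hm))). rewrite Heq in *. lra. }
  assert (Hcu : forall m, (i <= m < j)%nat -> s (S m) = center_update d M y sel (s m)).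
  { intros m Hm. apply (proj2 (proj2 (Hstep m) (Hc m Hm))). apply Hk; auto. }
  destruct (Nat.eq_dec j (S i)) as [->|Hj].
  - exists (S i). fold (s i). rewrite <- HsS. auto.
  - exists (S (S i)). fold (s (S i)). rewrite <- HsS.
    rewrite (Hcu (S i)) by lia. rewrite (Hcu i) by lia.
    apply cu_idem; auto. apply Hall. Qed.

Definition good {X} (d : X -> X -> R) dth M (lab : nat -> nat) (y : nat -> X) : Prop :=
  forall i i', (i < M)%nat -> (i' < M)%nat ->
    (lab i <> lab i' -> dth < d (y i) (y i')) /\ (lab i = lab i' -> d (y i) (y i') <= dth).

Definition G M (lab : nat -> nat) (a : list nat) : Prop :=
  length a = M /\ forall i, (i < M)%nat -> (cur a i < M)%nat /\ lab (cur a i) = lab i /\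
     forall j, (j < M)%nat -> lab j = lab i -> cur a j = cur a i.

Lemma G_correct M K lab a : G M lab a -> (forall i, (i < M)%nat -> (lab i < K)%nat) ->
  (forall k, (k < K)%nat -> exists i, (i < M)%nat /\ lab i = k) -> correct_partition M K lab a.
Proof. intros [Hl HG] HK Hcov. split.
  - intros c Hc. destruct (In_ex_cur M a c Hl Hc) as [i [Hi <-]]. exists (lab i). split; auto.
    intros j Hj. change (nth j a 0%nat) with (cur a j). destruct (HG i Hi) as [_ [_ H3]].
    destruct (HG j Hj) as [_ [H2' _]]. split.
    + intros E. rewrite <- H2', E. apply HG; auto.
    + intros E. apply H3; auto.
  - intros k Hk. destruct (Hcov k Hk) as [i [Hi <-]]. exists (cur a i). split. apply (In_cur M); auto.
    intros j Hj. change (nth j a 0%nat) with (cur a j). destruct (HG i Hi) as [_ [_ H3]].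
    destruct (HG j Hj) as [_ [H2' _]]. split.
    + intros E. rewrite <- H2', E. apply HG; auto.
    + intros E. apply H3; auto. Qed.

Lemma minR_fold_lt (f : nat -> R) dth c l : dth < fold_right (fun c' m => Rmin (f c') m) (f c) l <->
  dth < f c /\ forall c', In c' l -> dth < f c'.
Proof. induction l as [|a l IH]; simpl. { split; [intros; split; [auto|intros _ []]| tauto]. }
  split.
  - intros H. assert (H1 : dth < f a) by (eapply Rlt_le_trans; [exact H| apply Rmin_l]).
    assert (H2 : dth < fold_right (fun c' m => Rmin (f c') m) (f c) l) by (eapply Rlt_le_trans; [exact H| apply Rmin_r]).
    apply IH in H2. destruct H2 as [H2 H3]. split; auto. intros c' [<-|Hc]; auto.
  - intros [H1 H2]. apply Rmin_glb_lt. apply H2; left; auto. apply IH. split; auto. Qed.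

Lemma minR_lt (f : nat -> R) dth cs : cs <> [] -> (dth < minR_list f cs <-> forall c, In c cs -> dth < f c).
Proof. destruct cs as [|c l]; intros H. congruence. unfold minR_list. rewrite minR_fold_lt.
  split. intros [H1 H2] c' [<-|Hc]; auto. intros H'; split; [apply H'; left; auto| intros; apply H'; right; auto]. Qed.

Lemma nodup_len (l : list nat) K : NoDup l -> (forall x, In x l -> (x < K)%nat) -> (length l <= K)%nat.
Proof. intros Hnd Hb. rewrite <- (length_seq K 0). apply NoDup_incl_length; auto.
  intros x Hx; apply in_seq; specialize (Hb x Hx); lia. Qed.

Lemma grow_good {X} (d : X -> X -> R) dth M y sel lab K f cs : sel_ok sel -> (0 < M)%nat -> good d dth M lab y ->
  (forall i, (i < M)%nat -> (lab i < K)%nat) ->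
  (forall x, In x cs -> (x < M)%nat) -> NoDup (map lab cs) -> cs <> [] -> (K < length cs + f)%nat ->
  let cs' := grow d dth M y sel f cs in
  (forall x, In x cs' -> (x < M)%nat) /\ NoDup (map lab cs') /\
  forall i, (i < M)%nat -> exists c, In c cs' /\ lab c = lab i.
Proof. intros Hs HM Hg HK. revert cs. induction f as [|f IH]; intros cs Hb Hnd Hne Hlen cs'.
  - exfalso. assert (length (map lab cs) <= K)%nat.
    { apply nodup_len; auto. intros x Hx. apply in_map_iff in Hx. destruct Hx as [c [<- Hc]]. apply HK, Hb; auto. }
    rewrite length_map in H. lia.
  - unfold cs'. simpl. destruct existsb eqn:E.
    + apply existsb_exists in E. destruct E as [i [Hi Hall]]. apply in_idx in Hi.
      rewrite forallb_forall in Hall.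
      set (j := sel CInitMax _).
      assert (Hj : In j (argmax_set (fun i0 => minR_list (fun c => d (y i0) (y c)) cs) (idx M))).
      { apply Hs. apply argmax_nonempty. unfold idx; destruct M; [lia|]; simpl; congruence. }
      apply argmax_spec in Hj. destruct Hj as [Hj1 Hj2]. specialize (Hj2 i (proj2 (in_idx M i) Hi)).
      apply in_idx in Hj1.
      assert (Hmi : dth < minR_list (fun c => d (y i) (y c)) cs).
      { apply minR_lt; auto. intros c Hc. apply Rltb_true, Hall; auto. }
      assert (Hmj : forall c, In c cs -> dth < d (y j) (y c)).
      { apply (minR_lt (fun c => d (y j) (y c))); auto. lra. }
      apply IH.
      * intros x Hx. apply in_app_or in Hx. destruct Hx as [Hx|[<-|[]]]; auto.
      * rewrite map_app. simpl. eapply Permutation_NoDup. apply Permutation_cons_append.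
        constructor; auto. intros Hin. apply in_map_iff in Hin. destruct Hin as [c [Hc1 Hc2]].
        specialize (Hmj c Hc2). destruct (Hg j c Hj1 (Hb c Hc2)) as [_ H2]. specialize (H2 (eq_sym Hc1)). lra.
      * destruct cs; simpl; congruence.
      * rewrite length_app. simpl. lia.
    + split; [auto|split; [auto|]]. intros i Hi.
      assert (Hf : existsb (fun i => forallb (fun c => Rltb dth (d (y i) (y c))) cs) (idx M) <> true) by congruence.
      destruct (classic (exists c, In c cs /\ lab c = lab i)) as [Hc|Hc]; auto. exfalso. apply Hf.
      apply existsb_exists. exists i. split. apply in_idx; auto. apply forallb_forall. intros c Hcs.
      apply Rltb_true. destruct (Hg i c Hi (Hb c Hcs)) as [H1 _]. apply H1. intros E0; apply Hc; exists c; split; auto. Qed.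

Lemma init_G {X} (d : X -> X -> R) dth M y sel lab K : sel_ok sel -> (0 < M)%nat -> good d dth M lab y ->
  (forall i, (i < M)%nat -> (lab i < K)%nat) -> (K <= M)%nat ->
  G M lab (init_state d dth M y sel).
Proof. intros Hs HM Hg HK HKM.
  assert (Hne : idx M <> []) by (unfold idx; destruct M; [lia|]; simpl; congruence).
  assert (H0 : In (sel CFirst (idx M)) (idx M)) by (apply Hs; auto).
  destruct (grow_good d dth M y sel lab K M [sel CFirst (idx M)] Hs HM Hg HK) as [Hb [Hnd Hcov]].
  { intros x [<-|[]]. apply in_idx; auto. } { simpl. constructor; auto. constructor. } { congruence. } { simpl; lia. }
  fold (init_centers d dth M y sel) in Hb, Hnd, Hcov. set (cs := init_centers d dth M y sel) in *.
  unfold init_state. fold cs.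
  assert (Hz : forall i, (i < M)%nat -> let z := sel (CAssign i) (argmin_set (fun c => d (y i) (y c)) cs) in
     In z cs /\ lab z = lab i).
  { intros i Hi z. destruct (Hcov i Hi) as [c0 [Hc0 Hl0]].
    assert (Hzin : In z (argmin_set (fun c => d (y i) (y c)) cs)).
    { apply Hs, argmin_nonempty. intros E; rewrite E in Hc0; auto. }
    apply argmin_spec in Hzin. destruct Hzin as [Hz1 Hz2]. split; auto.
    specialize (Hz2 c0 Hc0). destruct (Hg i c0 Hi (Hb c0 Hc0)) as [_ H2]. specialize (H2 (eq_sym Hl0)).
    destruct (Nat.eq_dec (lab z) (lab i)); auto. destruct (Hg i z Hi (Hb z Hz1)) as [H1 _].
    specialize (H1 (not_eq_sym n)). lra. }
  split. rewrite length_map; unfold idx; apply length_seq.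
  intros i Hi. rewrite cur_map_idx by auto. destruct (Hz i Hi) as [Hz1 Hz2]. split; [apply Hb; auto|split; auto].
  intros j Hj Hlj. rewrite cur_map_idx by auto. destruct (Hz j Hj) as [Hz1' Hz2'].
  apply (NoDup_map_eq lab cs); auto. congruence. Qed.

Lemma it_G {X} (d : X -> X -> R) dth M y sel selp lab a : sel_ok sel -> (0 < M)%nat -> good d dth M lab y ->
  G M lab a -> G M lab (iteration d dth M y sel selp a).
Proof. intros Hs HM Hg [Hl HG]. rewrite it_eq.
  set (s1 := center_update d M y sel a).
  assert (G1 : G M lab s1).
  { assert (Hz : forall i, (i < M)%nat -> (cur s1 i < M)%nat /\ cur a (cur s1 i) = cur a i).
    { intros i Hi. unfold s1. rewrite (cur_cu d M y sel a i Hl Hi).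
      apply (newc_spec d M y sel a (cur a i) Hs Hl (In_cur M a i Hl Hi)). }
    split. unfold s1; rewrite cu_eq, length_map; auto.
    intros i Hi. destruct (Hz i Hi) as [Hz1 Hz2]. split; auto. split.
    - destruct (HG (cur s1 i) Hz1) as [_ [H2 _]]. rewrite <- H2, Hz2. apply HG; auto.
    - intros j Hj Hlj. unfold s1. rewrite !(cur_cu d M y sel a) by auto. f_equal. apply HG; auto. }
  destruct G1 as [Hl1 HG1].
  assert (Ee : eligible d dth y s1 = []).
  { unfold eligible. destruct (filter _ _) eqn:E; auto. exfalso.
    assert (Hin : In p (filter (fun pr => negb (Nat.eqb (fst pr) (snd pr)) && Rleb (d (y (fst pr)) (y (snd pr))) dth)
         (list_prod (centers s1) (centers s1)))) by (rewrite E; left; auto).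
    fold (eligible d dth y s1) in Hin. pose proof Hin as Hin2. apply eligible_in in Hin. destruct Hin as [Hne [H1 H2]].
    unfold eligible in Hin2. apply filter_In in Hin2. destruct Hin2 as [_ Hp]. apply Bool.andb_true_iff in Hp.
    destruct Hp as [_ Hp]. apply Rleb_true in Hp.
    destruct (In_ex_cur M s1 _ Hl1 H1) as [i [Hi Ei]]. destruct (In_ex_cur M s1 _ Hl1 H2) as [j [Hj Ej]].
    destruct (HG1 i Hi) as [Hi1 [Hi2 Hi3]]. destruct (HG1 j Hj) as [Hj1 [Hj2 Hj3]].
    destruct (Nat.eq_dec (lab i) (lab j)) as [E'|E'].
    - apply Hne. rewrite <- Ei, <- Ej. symmetry. apply Hi3; auto.
    - destruct (Hg (fst p) (snd p)) as [Hd _]. rewrite <- Ei; auto. rewrite <- Ej; auto.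
      assert (dth < d (y (fst p)) (y (snd p))). apply Hd. rewrite <- Ei, <- Ej, Hi2, Hj2; auto. lra. }
  assert (E2 : merge_loop d dth M y selp M s1 = s1). { destruct M; [lia|]. simpl. rewrite Ee. reflexivity. }
  rewrite E2. rewrite clu_eq.
  assert (HF : forall i, (i < M)%nat -> Fclu d y sel s1 i = cur s1 i).
  { intros i Hi. unfold Fclu. destruct existsb eqn:E; auto. exfalso.
    apply existsb_exists in E. destruct E as [c [Hc Hlt]]. apply Rltb_true in Hlt.
    unfold centers in Hc; rewrite nodup_In in Hc.
    destruct (In_ex_cur M s1 _ Hl1 Hc) as [j [Hj Ej]].
    destruct (HG1 i Hi) as [Hi1 [Hi2 Hi3]]. destruct (HG1 j Hj) as [Hj1 [Hj2 Hj3]].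
    destruct (Hg i (cur s1 i) Hi Hi1) as [_ Hdi]. specialize (Hdi (eq_sym Hi2)).
    destruct (Nat.eq_dec (lab i) (lab j)) as [E'|E'].
    - rewrite <- Ej, (Hi3 j Hj (eq_sym E')) in Hlt. lra.
    - destruct (Hg i c Hi) as [Hd _]. rewrite <- Ej; auto.
      assert (dth < d (y i) (y c)). apply Hd. rewrite <- Ej, Hj2. auto. lra. }
  rewrite (map_ext_in _ (cur s1)) by (intros i Hi; apply HF, in_idx; auto).
  rewrite map_cur_idx by auto. split; auto. Qed.

Lemma mass_ext {T} (Pr : charge T) (A B : T -> Prop) : (forall t, A t <-> B t) -> Pr A = Pr B.
Proof. intros H. replace B with A; auto. apply functional_extensionality; intros t.
  apply propositional_extensionality; auto. Qed.

Lemma mass_false {T} (Pr : charge T) : Pr (fun _ => False) = 0.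
Proof. pose proof (mass_add T Pr (fun _ => False) (fun _ => False) (fun _ x _ => x)).
  cbv beta in H. rewrite (mass_ext Pr (fun t => False \/ False) (fun _ => False)) in H by tauto. lra. Qed.

Lemma mass_split {T} (Pr : charge T) (A B : T -> Prop) :
  Pr (fun t => A t \/ B t) = Pr A + Pr (fun t => B t /\ ~ A t).
Proof. rewrite <- mass_add by tauto. apply mass_ext. intros t. destruct (classic (A t)); tauto. Qed.

Lemma mass_mono {T} (Pr : charge T) (A B : T -> Prop) : (forall t, A t -> B t) -> Pr A <= Pr B.
Proof. intros H. rewrite (mass_ext Pr B (fun t => A t \/ B t)) by firstorder.
  rewrite mass_split. pose proof (mass_nonneg T Pr (fun t => B t /\ ~ A t)). lra. Qed.

Lemma mass_union {T} (Pr : charge T) (A B : T -> Prop) : Pr (fun t => A t \/ B t) <= Pr A + Pr B.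
Proof. rewrite mass_split. pose proof (mass_mono Pr (fun t => B t /\ ~ A t) B (fun t H => proj1 H)). lra. Qed.

Lemma mass_exists {T} (Pr : charge T) (A : nat -> T -> Prop) l :
  Pr (fun t => exists i, In i l /\ A i t) <= sumR (fun i => Pr (A i)) l.
Proof. induction l as [|a l IH].
  - rewrite (mass_ext Pr _ (fun _ => False)) by (intros t; split; [intros [i [[] _]]| tauto]).
    rewrite mass_false. simpl. lra.
  - rewrite (mass_ext Pr _ (fun t => A a t \/ exists i, In i l /\ A i t)).
    + rewrite sumR_cons. pose proof (mass_union Pr (A a) (fun t => exists i, In i l /\ A i t)). lra.
    + intros t; split.
      * intros [i [[<-|Hi] H]]; [left; auto| right; eauto].
      * intros [H|[i [Hi H]]]; [exists a; split; [left|]; auto| exists i; split; [right|]; auto]. Qed.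

Theorem part_b : forall (S Omega : Type) (Pr : charge Omega) (n K M : nat) (lab : nat -> nat)
          (Pc : nat -> charge S -> Prop) (dP : charge S -> charge S -> R)
          (p : nat -> charge S) (Xs : nat -> nat -> Omega -> S)
          (d : list S -> list S -> R) (dth a1 a2 a3 b : R)
          (sel : choice_point -> list nat -> nat)
          (selp : list (nat * nat) -> nat * nat),
      (0 < K)%nat ->
      (forall i, (i < M)%nat -> (lab i < K)%nat) ->
      (forall k, (k < K)%nat -> exists i, (i < M)%nat /\ lab i = k) ->
      (forall q q', dP q q' = dP q' q) ->
      (forall u v, d u v = d v u) ->
      (forall u v, d u u <= d u v) ->
      (forall u, d u u <= dth) ->
      (forall i, (i < M)%nat -> Pc (lab i) (p i)) ->
      iid_model Pr M n p Xs ->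
      threshold_separates K Pc dP dth ->
      0 <= a1 -> 0 <= a2 -> 0 <= a3 -> 0 < b ->
      assumptionA_bounds Pr M n lab (data n Xs) d dth a1 a2 a3 b ->
      sel_ok sel -> selp_ok selp ->
      forall T : nat,
        Pr (fun w => ~ correct_partition M K lab
                         (run d dth M (fun i => data n Xs i w) sel selp T))
        <= INR M ^ 2 * ((INR T + 1) * a1 + a2 + (INR T + 1) * a3)
           * exp (- (b * INR n)).
Proof. intros S Omega Pr n K M lab Pc dP p Xs d dth a1 a2 a3 b sel selp HK HlabK Hcov _ Hsym Hd Hdd _ _ _
    Ha1 Ha2 Ha3 Hb [HA1 [HA2 _]] Hs Hsp T.
  set (e := exp (- (b * INR n))). assert (He : 0 < e) by apply exp_pos.
  destruct (Hcov 0%nat HK) as [i0 [Hi0 _]]. assert (HM : (0 < M)%nat) by lia.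
  assert (HKM : (K <= M)%nat).
  { rewrite <- (length_seq K 0). replace M with (length (map lab (idx M))) by (rewrite length_map; unfold idx; apply length_seq).
    apply NoDup_incl_length. apply seq_NoDup. intros k Hk. apply in_seq in Hk.
    destruct (Hcov k ltac:(lia)) as [i [Hi <-]]. apply in_map, in_idx; auto. }
  set (E := fun i i' w => (lab i <> lab i' /\ d (data n Xs i w) (data n Xs i' w) <= dth) \/
                          (lab i = lab i' /\ i <> i' /\ d (data n Xs i w) (data n Xs i' w) > dth)).
  assert (Hsub : forall w, ~ correct_partition M K lab (run d dth M (fun i => data n Xs i w) sel selp T) ->
     exists i, In i (idx M) /\ exists i', In i' (idx M) /\ E i i' w).
  { intros w Hn. apply NNPP. intros Hn'. apply Hn.
    assert (Hg : good d dth M lab (fun i => data n Xs i w)).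
    { intros i i' Hi Hi'. split.
      - intros Hl. apply Rnot_le_lt. intros Hle. apply Hn'. exists i; split; [apply in_idx; auto|].
        exists i'; split; [apply in_idx; auto|]. left; auto.
      - intros Hl. apply Rnot_lt_le. intros Hlt. destruct (Nat.eq_dec i i') as [<-|Hii].
        + specialize (Hdd (data n Xs i w)). lra.
        + apply Hn'. exists i; split; [apply in_idx; auto|].
          exists i'; split; [apply in_idx; auto|]. right; auto. }
    apply (G_correct M K lab); auto.
    clear Hn Hn'. induction T as [|T IH].
    - apply (init_G d dth M _ sel lab K); auto.
    - rewrite run_S. apply it_G; auto. }
  assert (HE : forall i i', In i (idx M) -> In i' (idx M) -> Pr (E i i') <= (a1 + a2) * e).
  { intros i i' Hi Hi'. apply in_idx in Hi. apply in_idx in Hi'. unfold E.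
    eapply Rle_trans. apply mass_union. replace ((a1 + a2) * e) with (a1 * e + a2 * e) by ring. apply Rplus_le_compat.
    - destruct (Nat.eq_dec (lab i) (lab i')) as [El|El].
      + eapply Rle_trans. apply (mass_mono Pr _ (fun _ => False)). tauto. rewrite mass_false. nra.
      + eapply Rle_trans. apply (mass_mono Pr _ (fun w => d (data n Xs i w) (data n Xs i' w) <= dth)). tauto.
        apply HA1; auto.
    - destruct (Nat.eq_dec (lab i) (lab i')) as [El|El]; [destruct (Nat.eq_dec i i') as [Ei|Ei]|].
      + eapply Rle_trans. apply (mass_mono Pr _ (fun _ => False)). tauto. rewrite mass_false. nra.
      + eapply Rle_trans. apply (mass_mono Pr _ (fun w => d (data n Xs i w) (data n Xs i' w) > dth)). tauto.
        apply HA2; auto.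
      + eapply Rle_trans. apply (mass_mono Pr _ (fun _ => False)). tauto. rewrite mass_false. nra. }
  eapply Rle_trans. apply (mass_mono Pr _ _ Hsub).
  eapply Rle_trans. apply mass_exists.
  eapply Rle_trans. apply (sumR_le _ (fun _ => INR M * ((a1 + a2) * e))).
  { intros i Hi. eapply Rle_trans. apply mass_exists.
    replace (INR M) with (INR (length (idx M))) by (unfold idx; rewrite length_seq; auto).
    rewrite <- sumR_const. apply sumR_le. intros i' Hi'. apply HE; auto. }
  rewrite sumR_const. unfold idx; rewrite length_seq.
  assert (HMp : 0 <= INR M) by apply pos_INR. assert (HTp : 0 <= INR T) by apply pos_INR.
  assert (Hk : a1 + a2 <= (INR T + 1) * a1 + a2 + (INR T + 1) * a3) by nra.
  assert (0 <= INR M * INR M * e) by (apply Rmult_le_pos; [apply Rmult_le_pos|]; lra).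
  replace (INR M ^ 2 * ((INR T + 1) * a1 + a2 + (INR T + 1) * a3) * e)
    with ((INR M * INR M * e) * ((INR T + 1) * a1 + a2 + (INR T + 1) * a3)) by ring.
  replace (INR M * (INR M * ((a1 + a2) * e))) with ((INR M * INR M * e) * (a1 + a2)) by ring.
  apply Rmult_le_compat_l; auto. Qed.

Theorem theorem2 :
  (* (a) termination, for any data *)
  (forall (X : Type) (d : X -> X -> R) (dth : R) (M : nat) (y : nat -> X)
          (sel : choice_point -> list nat -> nat)
          (selp : list (nat * nat) -> nat * nat),
      (0 < M)%nat -> sel_ok sel -> selp_ok selp ->
      (forall u v, d u v = d v u) ->
      (forall u v, d u u <= d u v) ->
      (forall u, d u u <= dth) ->
      exists N : nat,
        iteration d dth M y sel selp (run d dth M y sel selp N)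
        = run d dth M y sel selp N)
  /\
  (* (b) probability of an incorrect partition after T iterations *)
  (forall (S Omega : Type) (Pr : charge Omega) (n K M : nat) (lab : nat -> nat)
          (Pc : nat -> charge S -> Prop) (dP : charge S -> charge S -> R)
          (p : nat -> charge S) (Xs : nat -> nat -> Omega -> S)
          (d : list S -> list S -> R) (dth a1 a2 a3 b : R)
          (sel : choice_point -> list nat -> nat)
          (selp : list (nat * nat) -> nat * nat),
      (0 < K)%nat ->
      (forall i, (i < M)%nat -> (lab i < K)%nat) ->
      (forall k, (k < K)%nat -> exists i, (i < M)%nat /\ lab i = k) ->
      (forall q q', dP q q' = dP q' q) ->
      (forall u v, d u v = d v u) ->
      (forall u v, d u u <= d u v) ->
      (forall u, d u u <= dth) ->
      (forall i, (i < M)%nat -> Pc (lab i) (p i)) ->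
      iid_model Pr M n p Xs ->
      threshold_separates K Pc dP dth ->
      0 <= a1 -> 0 <= a2 -> 0 <= a3 -> 0 < b ->
      assumptionA_bounds Pr M n lab (data n Xs) d dth a1 a2 a3 b ->
      sel_ok sel -> selp_ok selp ->
      forall T : nat,
        Pr (fun w => ~ correct_partition M K lab
                         (run d dth M (fun i => data n Xs i w) sel selp T))
        <= INR M ^ 2 * ((INR T + 1) * a1 + a2 + (INR T + 1) * a3)
           * exp (- (b * INR n))).
Proof. split. exact part_a. exact part_b. Qed.
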